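(* Let $k$ be a field with a non-archimedean absolute value $v:k\to\mathbb T$. Let $A_0$ be the monoid (with an adjoined zero) of an affine toric $k$-variety $\operatorname{Spec}k[A_0]^+$, let $R$ be a $k$-algebra and $\pi:k[A_0]^+\to R$ a surjective $k$-algebra homomorphism (a closed embedding $\iota:Y=\operatorname{Spec}R\to\operatorname{Spec}k[A_0]^+$). Let $B$ be the blueprint with $B^+=R$ (trivially ordered) and $B^\bullet=\{\pi(c\,a): c\in k,\ a\in A_0\}$, and let $\beta:B\to R$ be the inclusion (with $R$ viewed as the trivially ordered blueprint with $R^\bullet=R^+=R$). Then: (1) the Berkovich space $Y^{\mathrm{an}}$ is naturally homeomorphic to $\mathrm{Hom}_{\mathbb T}(\mathrm{Bend}_v(R),\mathbb T)$, via $w\mapsto (r\otimes t\mapsto w(r)t)$; (2) the Kajiwara–Payne tropicalization $\mathrm{Trop}^{KP}_{v,\iota}(Y)$ is naturally homeomorphic to $\mathrm{Hom}_{\mathbb T}(\mathrm{Bend}_v(B),\mathbb T)$, via the map sending $f:\mathrm{Bend}_v(B)\to\mathbb T$ to the monoid morphism $a\mapsto f(\pi(a)\otimes1)$; (3) the square whose top arrow is $\mathrm{trop}^{KP}_{v,\iota}:Y^{\mathrm{an}}\to\mathrm{Trop}^{KP}_{v,\iota}(Y)$, whose vertical arrows are these homeomorphisms and whose bottom arrow is precomposition with $\mathrm{Bend}_v(\beta):\mathrm{Bend}_v(B)\to\mathrm{Bend}_v(R)$, is a commutative diagram of continuous maps.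
   Context: $\mathbb T$ (tropical numbers) is the semiring $\mathbb R_{\ge0}$ with usual multiplication and addition $a+b=\max\{a,b\}$, with the real topology. A non-archimedean absolute value $v:k\to\mathbb T$ is a multiplicative map with $v(0)=0$, $v(1)=1$, $v(a+b)\le\max\{v(a),v(b)\}$. $k[A_0]^+$ denotes the monoid algebra of $A_0$ over $k$ with the zero of $A_0$ identified with $0$. Berkovich space: $Y^{\mathrm{an}}$ is the set of multiplicative maps $w:R\to\mathbb R_{\ge0}$ with $w(0)=0$, $w(1)=1$, $w(a+b)\le\max\{w(a),w(b)\}$ and $w|_k=v$, with the coarsest topology making all $w\mapsto w(r)$ ($r\in R$) continuous. $\mathrm{Hom}(A_0,\mathbb T)$ is the set of monoid morphisms preserving $0$ and $1$, with the topology of pointwise convergence; $\mathrm{trop}^{KP}_{v,\iota}(w)=(a\mapsto w(\pi(a)))$ and $\mathrm{Trop}^{KP}_{v,\iota}(Y)$ is its image with the subspace topology. Ordered blueprints: pairs of an ordered semiring $B^+$ (commutative, partial order compatible with $+$ and $\cdot$) and a multiplicatively closed generating subset $B^\bullet\ni0,1$; morphisms are order-preserving semiring homomorphisms preserving $\bullet$. Rings/semirings are viewed as trivially ordered with $R^\bullet=R$; $k$ is a $k$-algebra, $\mathbb T$ an ordered blue $\mathbb T$-algebra. The valuation $v$ is a valuation in the sense: multiplicative map on underlying monoids with $a\le \sum b_j$ implying $v(a)\le\sum v(b_j)$ in the natural order of $\mathbb T$. For an ordered blue $k$-algebra $C$, $\mathrm{Bend}_v(C)$ is the ordered blue $\mathbb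 T$-algebra with underlying monoid $C^\bullet\otimes_{k^\bullet}\mathbb T$ (elements $c\otimes t$, $(\lambda c)\otimes t=c\otimes v(\lambda)t$ for $\lambda\in k$) and semiring the quotient of $\mathbb T[C^\bullet]^+$ by the congruence generated by $(v(\lambda)t)\cdot c=t\cdot(\lambda c)$ and $t a+\sum_j t b_j=\sum_j t b_j$ whenever $a\le\sum b_j$ in $C^+$. $\mathrm{Hom}_{\mathbb T}(\mathrm{Bend}_v(C),\mathbb T)$ (the $\mathbb T$-rational points of $\operatorname{Spec}\mathrm{Bend}_v(C)$) carries the coarsest topology making all evaluation maps $f\mapsto f(x)$ continuous. *)

(* Defs.v *)
From mathcomp Require Import all_boot all_order all_algebra.
From mathcomp Require Import all_classical all_reals all_analysis.

Set Implicit Arguments.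
Unset Strict Implicit.
Unset Printing Implicit Defensive.

Import Order.TTheory GRing.Theory Num.Theory.
Import numFieldTopology.Exports numFieldNormedType.Exports.
Local Open Scope classical_set_scope.
Local Open Scope ring_scope.

(** The tropical numbers T = R_{>=0} with max and times are represented inside a real
   field [K : realType] as the nonnegative elements; the semiring addition of T
   is [Num.max]; the topology is the (subspace) real topology.             *)

Definition homeo_on (X Y : topologicalType) (A : set X) (B : set Y)
    (f : X -> Y) : Prop :=
  (forall x, A x -> B (f x)) /\
  exists g : Y -> X,
    [/\ (forall y, B y -> A (g y)),
        (forall x, A x -> g (f x) = x),
        (forall y, B y -> f (g y) = y),
        {within A, continuous f} &
        {within B, continuous g}].

Definition nonarch_abs (K : realType) (k : fieldType) (v : k -> K) : Prop :=
  [/\ forall a, 0 <= v a,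
      v 0 = 0, v 1 = 1,
      (forall a b, v (a * b) = v a * v b) &
      (forall a b, v (a + b) <= Num.max (v a) (v b))].

(** A is the affine monoid (finitely generated submonoid of the lattice Z^n,
   written additively) generated by [gens]; A_0 = A u {0} is modelled as
   [option 'rV[int]_n] with [None] the adjoined (absorbing) zero. *)
Inductive inA (n : nat) (gens : seq 'rV[int]_n) : 'rV[int]_n -> Prop :=
| inA_0 : inA gens 0
| inA_S a g : inA gens a -> g \in gens -> inA gens (a + g).

Definition inA0 n (gens : seq 'rV[int]_n) (x : option 'rV[int]_n) : Prop :=
  if x is Some a then inA gens a else True.

Definition A0 n (gens : seq 'rV[int]_n) := {x : option 'rV[int]_n | inA0 gens x}.

(* the monoid law of A_0 (written multiplicatively in the paper) *)
Definition mulA0 n (x y : option 'rV[int]_n) : option 'rV[int]_n :=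
  match x, y with Some a, Some b => Some (a + b) | _, _ => None end.
Definition oneA0 n : option 'rV[int]_n := Some 0.

(** A commutative ring P with a ring map [iP : k -> P] (k-algebra structure),
   and a map [e : A_0 -> P] which is a morphism of monoids with zero into
   the multiplicative monoid of P, such that the e(a), a in A, form a k-basis of P. *)
Definition is_monoid_algebra (k : fieldType) (P : comPzRingType)
    (iP : {rmorphism k -> P}) n (gens : seq 'rV[int]_n) (e : A0 gens -> P) :=
  [/\ (forall x : A0 gens, proj1_sig x = None -> e x = 0),
      (forall x : A0 gens, proj1_sig x = oneA0 n -> e x = 1),
      (forall x y z : A0 gens, proj1_sig z = mulA0 (proj1_sig x) (proj1_sig y) -> e z = e x * e y),
      (forall p : P, exists (s : seq (A0 gens)) (c : A0 gens -> k),
          p = \sum_(a <- s) iP (c a) * e a) &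
      (forall (s : seq (A0 gens)) (c : A0 gens -> k),
          uniq (map (@proj1_sig _ _) s) -> (forall a, a \in map (@proj1_sig _ _) s -> a != None) ->
          \sum_(a <- s) iP (c a) * e a = 0 -> all (fun a => c a == 0) s)].

Definition berk (K : realType) (k : fieldType) (v : k -> K) (R : comPzRingType)
    (iR : {rmorphism k -> R}) (w : {ptws R -> K}) : Prop :=
  (forall r, 0 <= w r) /\
  w 0 = 0 /\ w 1 = 1 /\
  (forall a b, w (a * b) = w a * w b) /\
  (forall a b, w (a + b) <= Num.max (w a) (w b)) /\
  (forall c, w (iR c) = v c).

Definition tropKP (K : realType) (R : comPzRingType) (P : comPzRingType)
    (pi : P -> R) n (gens : seq 'rV[int]_n) (e : A0 gens -> P)
    (w : {ptws R -> K}) : {ptws A0 gens -> K} :=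
  fun a => w (pi (e a)).

(** * Bend_v(C) for the ordered blue k-algebra C with C^+ = R (trivially
   ordered) and C^bullet = M (a multiplicatively closed k^bullet-stable
   generating subset of R containing 0 and 1).

   Elements of the monoid semiring T[M]^+ are represented by finite formal
   sums  sum_i t_i [m_i]  (lists of pairs (t_i, m_i), t_i in T, m_i in M);
   [++] is the sum and [fsmul] the product.  [bcong] is the congruence on
   T[M]^+ making lists into T[M]^+ (commutativity, t[m]+s[m] = (t+s)[m],
   0[m] = 0) together with the congruence generated by the Bend relations
   (v(lam) t)[c] = t[lam c]   and   t[a] + sum_j t[b_j] = sum_j t[b_j]
   whenever a <= sum_j b_j in C^+ (i.e. a = sum_j b_j, C^+ trivially ordered).
*)
Section Bend.
Variables (K : realType) (k : fieldType) (v : k -> K) (R : comPzRingType)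
          (iR : {rmorphism k -> R}) (M : set R).

Definition fsum := seq (K * R).

Definition valid (x : fsum) : Prop :=
  forall p, p \in x -> 0 <= p.1 /\ M p.2.

Definition fsmul (x y : fsum) : fsum :=
  [seq (p.1 * q.1, p.2 * q.2) | p <- x, q <- y].

Inductive bcong : fsum -> fsum -> Prop :=
| bc_refl x : valid x -> bcong x x
| bc_sym x y : bcong x y -> bcong y x
| bc_trans x y z : bcong x y -> bcong y z -> bcong x z
| bc_add x x' y y' : bcong x x' -> bcong y y' -> bcong (x ++ y) (x' ++ y')
| bc_mul x x' y y' : bcong x x' -> bcong y y' ->
    bcong (fsmul x y) (fsmul x' y')
| bc_addC x y : valid x -> valid y -> bcong (x ++ y) (y ++ x)
| bc_idem t s m : 0 <= t -> 0 <= s -> M m ->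
    bcong [:: (t, m); (s, m)] [:: (Num.max t s, m)]
| bc_zero m : M m -> bcong [:: (0, m)] [::]
| bc_scal (lam : k) t c : 0 <= t -> M c -> M (iR lam * c) ->
    bcong [:: (v lam * t, c)] [:: (t, iR lam * c)]
| bc_bend t a (bs : seq R) : 0 <= t -> M a -> (forall b, b \in bs -> M b) ->
    a = \sum_(b <- bs) b ->
    bcong ((t, a) :: [seq (t, b) | b <- bs]) [seq (t, b) | b <- bs].

Definition bend : Type :=
  {P : fsum -> Prop | exists x, valid x /\ P = bcong x}.

Lemma valid_nil : valid [::].
Proof. by move=> p. Qed.

Definition cls (x : fsum) : bend :=
  match pselect (valid x) with
  | left h => exist _ (bcong x) (ex_intro _ x (conj h erefl))
  | right _ => exist _ (bcong [::]) (ex_intro _ [::] (conj valid_nil erefl))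
  end.

Definition rep (X : bend) : fsum := proj1_sig (cid (proj2_sig X)).

(** Hom_T(Bend_v(C), T): morphisms of ordered blue T-algebras into T.
    (The order on Bend_v(C) is its natural order x <= y iff x + y = y.) *)
Definition bend_hom (f : {ptws bend -> K}) : Prop :=
  (forall X, 0 <= f X) /\
  (forall x y, valid x -> valid y ->
     f (cls (x ++ y)) = Num.max (f (cls x)) (f (cls y))) /\
  (forall x y, valid x -> valid y ->
     f (cls (fsmul x y)) = f (cls x) * f (cls y)) /\
  f (cls [::]) = 0 /\
  (forall t, 0 <= t -> f (cls [:: (t, 1)]) = t) /\
  (forall x y, valid x -> valid y -> cls (x ++ y) = cls y ->
     f (cls x) <= f (cls y)).

End Bend.

(** Bend_v(beta) : Bend_v(B) -> Bend_v(R) induced by the identity of R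
    (beta : B -> R the inclusion B^bullet c R). *)
Definition bend_incl (K : realType) (k : fieldType) (v : k -> K)
    (R : comPzRingType) (iR : {rmorphism k -> R}) (M : set R)
    (X : bend v iR M) : bend v iR setT :=
  cls v iR setT (rep X).

Definition Bbullet (k : fieldType) (P R : comPzRingType)
    (iP : {rmorphism k -> P}) (pi : P -> R) n (gens : seq 'rV[int]_n)
    (e : A0 gens -> P) : set R :=
  [set r | exists (c : k) (a : A0 gens), r = pi (iP c * e a)].

(* Main.v *)
From HB Require Import structures.
From Stdlib Require List.
Require Import Defs.
From mathcomp Require Import all_boot all_order all_algebra.
From mathcomp Require Import all_classical all_reals all_analysis.
From mathcomp Require Import ring lra.

Import Order.TTheory GRing.Theory Num.Theory.
Import numFieldTopology.Exports numFieldNormedType.Exports.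
Local Open Scope classical_set_scope.
Local Open Scope ring_scope.

Set Implicit Arguments.
Unset Strict Implicit.
Unset Printing Implicit Defensive.

Lemma sig_eq (T : Type) (P : T -> Prop) (a b : {x | P x}) :
  proj1_sig a = proj1_sig b -> a = b.
Proof.
case: a b => a pa [b pb] /= eab; subst b; congr exist; exact: Prop_irrelevance.
Qed.

Definition mxl (K : realType) (T : Type) (F : T -> K) (s : seq T) : K :=
  foldr (fun x acc => Num.max (F x) acc) 0 s.

Section MXL.
Variables (K : realType) (T : Type).
Implicit Types (F G : T -> K) (s : seq T).

Lemma mxl_ge0 F s : 0 <= mxl F s.
Proof. by elim: s => [|x s IH] //=; rewrite le_max IH orbT. Qed.

Lemma mxl_cat F s t : mxl F (s ++ t) = Num.max (mxl F s) (mxl F t).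
Proof.
elim: s => [|x s IH] /=; first by rewrite max_r // mxl_ge0.
by rewrite IH maxA.
Qed.


Lemma mxl_ge F s x : List.In x s -> F x <= mxl F s.
Proof.
elim: s => [|y s IH] //= [->|/IH h]; rewrite le_max ?lexx //.
by rewrite h orbT.
Qed.

Lemma mxl_le F s c : 0 <= c -> (forall x, List.In x s -> F x <= c) -> mxl F s <= c.
Proof.
move=> c0; elim: s => [|y s IH] //= h; rewrite ge_max h /=; last by left.
by apply: IH => x hx; apply: h; right.
Qed.

Lemma mxl_mull F s c : 0 <= c -> mxl (fun x => c * F x) s = c * mxl F s.
Proof.
move=> c0; elim: s => [|y s IH] /=; first by rewrite mulr0.
by rewrite IH maxr_pMr.
Qed.

Lemma mxl_eq F G s : (forall x, List.In x s -> F x = G x) -> mxl F s = mxl G s.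
Proof.
elim: s => [|y s IH] //= h; rewrite h; last by left.
by rewrite IH // => x hx; apply: h; right.
Qed.

Lemma mxl_map (U : Type) (f : U -> T) F (s : seq U) :
  mxl F (map f s) = mxl (F \o f) s.
Proof. by elim: s => [|y s IH] //=; rewrite IH. Qed.

End MXL.

Section BendGen.
Variables (K : realType) (k : fieldType) (v : k -> K) (R : comPzRingType)
          (iR : {rmorphism k -> R}).

Lemma cls_eq (M : set R) (x y : fsum K R) : valid M x -> valid M y ->
  bcong v iR M x y -> cls v iR M x = cls v iR M y.
Proof.
move=> vx vy bxy; apply: sig_eq; rewrite /cls.
case: pselect => // hx; case: pselect => // hy /=.
apply/funext => z; apply/propext; split => h.
  exact: bc_trans (bc_sym bxy) h.
exact: bc_trans bxy h.
Qed.

Lemma rep_spec (M : set R) (X : bend v iR M) :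
  valid M (rep X) /\ proj1_sig X = bcong v iR M (rep X).
Proof. by rewrite /rep; case: cid => y [vy Ey]. Qed.

Lemma rep_valid (M : set R) (X : bend v iR M) : valid M (rep X).
Proof. by case: (rep_spec X). Qed.

Lemma cls_rep (M : set R) (X : bend v iR M) : cls v iR M (rep X) = X.
Proof.
apply: sig_eq; have [vr Er] := rep_spec X; rewrite Er /cls.
by case: pselect.
Qed.

Lemma cls_bcong (M : set R) (x y : fsum K R) : valid M x -> valid M y ->
  cls v iR M x = cls v iR M y -> bcong v iR M x y.
Proof.
move=> vx vy /(congr1 (@proj1_sig _ _)); rewrite /cls.
case: pselect => // hx; case: pselect => // hy /= E.
by rewrite E; apply: bc_refl.
Qed.

Lemma rep_cls (M : set R) (x : fsum K R) : valid M x ->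
  bcong v iR M (rep (cls v iR M x)) x.
Proof.
move=> vx; apply: cls_bcong => //; first exact: rep_valid.
by rewrite cls_rep.
Qed.

Lemma valid_mono (M M' : set R) (x : fsum K R) : M `<=` M' -> valid M x -> valid M' x.
Proof. by move=> MM h p /h [? /MM]. Qed.

Lemma bcong_mono (M M' : set R) (x y : fsum K R) : M `<=` M' ->
  bcong v iR M x y -> bcong v iR M' x y.
Proof.
move=> MM; elim=> {x y}.
- by move=> x /(valid_mono MM) h; apply: bc_refl.
- by move=> x y _ h; apply: bc_sym.
- by move=> x y z _ h1 _ h2; apply: bc_trans h1 h2.
- by move=> x x' y y' _ h1 _ h2; apply: bc_add.
- by move=> x x' y y' _ h1 _ h2; apply: bc_mul.
- by move=> x y /(valid_mono MM) ? /(valid_mono MM) ?; apply: bc_addC.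
- by move=> t s m t0 s0 /MM ?; apply: bc_idem.
- by move=> m /MM ?; apply: bc_zero.
- by move=> lam t c t0 /MM ? /MM ?; apply: bc_scal.
- move=> t a bs t0 /MM Ma hb e; apply: bc_bend => //.
  by move=> b /hb /MM.
Qed.

Definition vl (h : R -> K) (x : fsum K R) : K := mxl (fun p => h p.2 * p.1) x.

Lemma vl_cat h x y : vl h (x ++ y) = Num.max (vl h x) (vl h y).
Proof. exact: mxl_cat. Qed.

Lemma vl_ge0 h x : 0 <= vl h x.
Proof. exact: mxl_ge0. Qed.

Lemma vl1 h t r : 0 <= h r * t -> vl h [:: (t, r)] = h r * t.
Proof. by move=> h0; rewrite /vl /= max_l. Qed.

Hypothesis hv : nonarch_abs v.

Lemma v_ge0 c : 0 <= v c.
Proof. by case: hv. Qed.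

Lemma vl_fsmul (M : set R) h x y :
  (forall a, M a -> 0 <= h a) ->
  (forall a b, M a -> M b -> h (a * b) = h a * h b) ->
  valid M x -> valid M y ->
  vl h (fsmul x y) = vl h x * vl h y.
Proof.
move=> hge hm vx vy; elim: x vx => [|p x IH] vx /=; first by rewrite mul0r.
have vx' : valid M x by move=> q hq; apply: vx; rewrite inE hq orbT.
rewrite /fsmul /= -/(fsmul x y) vl_cat (IH vx').
have [p0 Mp] := vx p (mem_head _ _).
rewrite maxr_pMl ?vl_ge0 //; congr Num.max.
rewrite /vl mxl_map -mxl_mull ?mulr_ge0 ?hge //.
elim: y vy {IH vx'} => [|q y IHy] vy //=.
have vy' : valid M y by move=> z hz; apply: vy; rewrite inE hz orbT.
have [q0 Mq] := vy q (mem_head _ _).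
rewrite IHy // hm //; congr Num.max.
by rewrite -!mulrA; congr (_ * _); rewrite mulrCA; congr (_ * _); rewrite mulrC.
Qed.

Lemma valid_cat (M : set R) (x y : fsum K R) :
  valid M (x ++ y) <-> valid M x /\ valid M y.
Proof.
split=> [h|[hx hy]].
  by split=> p hp; apply: h; rewrite mem_cat hp ?orbT.
by move=> p; rewrite mem_cat => /orP[/hx|/hy].
Qed.

Lemma valid_fsmul (M : set R) (x y : fsum K R) :
  (forall a b, M a -> M b -> M (a * b)) ->
  valid M x -> valid M y -> valid M (fsmul x y).
Proof.
move=> hMm hx hy p /allpairsP[[a b] [/= ha hb ->]] /=.
have [a0 Ma] := hx _ ha; have [b0 Mb] := hy _ hb.
by split; [exact: mulr_ge0|exact: hMm].
Qed.

Section Inv.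
Variables (M : set R) (h : R -> K).
Hypotheses (hge : forall a, M a -> 0 <= h a)
  (hm : forall a b, M a -> M b -> h (a * b) = h a * h b)
  (hMm : forall a b, M a -> M b -> M (a * b))
  (hsc : forall lam c, M c -> M (iR lam * c) -> h (iR lam * c) = v lam * h c)
  (hb : forall a bs, M a -> (forall b, b \in bs -> M b) ->
          a = \sum_(b <- bs) b -> h a <= mxl h bs).

Lemma vl_bcong x y : bcong v iR M x y ->
  [/\ valid M x, valid M y & vl h x = vl h y].
Proof.
elim=> {x y}.
- by move=> x vx.
- by move=> x y _ [].
- by move=> x y z _ [? ? ->] _ [].
- move=> x x' y y' _ [vx vx' ex] _ [vy vy' ey].
  by split; rewrite ?valid_cat // !vl_cat ex ey.
- move=> x x' y y' _ [vx vx' ex] _ [vy vy' ey].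
  split; try exact: valid_fsmul.
  by rewrite (vl_fsmul hge hm vx vy) (vl_fsmul hge hm vx' vy') ex ey.
- move=> x y vx vy; split; rewrite ?valid_cat //.
  by rewrite !vl_cat maxC.
- move=> t s m t0 s0 Mm; split.
  + by move=> p; rewrite !inE => /orP[] /eqP -> /=.
  + by move=> p; rewrite !inE => /eqP -> /=; rewrite le_max t0.
  + by rewrite /vl /= maxA -maxr_pMr ?hge // max_l // mulr_ge0 ?le_max ?t0 ?hge.
- move=> m Mm; split => //; first by move=> p; rewrite inE => /eqP -> /=.
  by rewrite /vl /= mulr0 maxxx.
- move=> lam t c t0 Mc Mlc; split.
  + by move=> p; rewrite inE => /eqP -> /=; rewrite mulr_ge0 ?v_ge0.
  + by move=> p; rewrite inE => /eqP -> /=.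
  + by rewrite /vl /= hsc // mulrCA mulrA.
- move=> t a bs t0 Ma hbs e.
  have vL : valid M [seq (t, b) | b <- bs].
    by move=> p /mapP[b hb' ->] /=; split => //; apply: hbs.
  split => //.
    by move=> p; rewrite inE => /orP[/eqP -> //|/vL].
  rewrite {1}/vl /= -/(vl h _); apply/max_r.
  rewrite /vl mxl_map /comp /=.
  have -> : mxl (fun x => h x * t) bs = mxl h bs * t.
    by rewrite mulrC -mxl_mull //; apply: mxl_eq => z _; rewrite mulrC.
  by apply: ler_wpM2r => //; apply: hb.
Qed.
End Inv.


Lemma vl_cls (M : set R) (h : R -> K)
  (hge : forall a, M a -> 0 <= h a)
  (hm : forall a b, M a -> M b -> h (a * b) = h a * h b)
  (hMm : forall a b, M a -> M b -> M (a * b))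
  (hsc : forall lam c, M c -> M (iR lam * c) -> h (iR lam * c) = v lam * h c)
  (hb : forall a bs, M a -> (forall b, b \in bs -> M b) ->
          a = \sum_(b <- bs) b -> h a <= mxl h bs) x :
  valid M x -> vl h (rep (cls v iR M x)) = vl h x.
Proof. by move=> vx; have [] := vl_bcong hge hm hMm hsc hb (rep_cls vx). Qed.

Lemma berk_ultra (w : R -> K) : berk v iR w -> forall bs : seq R,
  w (\sum_(b <- bs) b) <= mxl w bs.
Proof.
move=> [w0 [ww0 [w1 [wm [wu wc]]]]]; elim=> [|b bs IH].
  by rewrite big_nil ww0.
rewrite big_cons /=; apply: le_trans (wu _ _) _.
by rewrite ge_max le_max lexx /= le_max IH orbT.
Qed.

Definition Fw (M : set R) (w : R -> K) : {ptws bend v iR M -> K} :=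
  fun X => vl w (rep X).

Lemma Fw_hom (M : set R) (w : R -> K) : M 1 ->
  (forall a b, M a -> M b -> M (a * b)) -> berk v iR w ->
  bend_hom (@Fw M w).
Proof.
move=> M1 hMm bw; have bw' := bw.
move: bw' => [w0 [ww0 [w1 [wm [wu wc]]]]].
have hvl : forall x, valid M x -> vl w (rep (cls v iR M x)) = vl w x.
  apply: vl_cls => //.
  - by move=> lam c _ _; rewrite wm wc.
  - by move=> a bs _ _ ->; apply: berk_ultra.
rewrite /Fw; split; first by move=> X; apply: vl_ge0.
split.
  move=> x y vx vy; rewrite !hvl ?vl_cat //.
  by apply/valid_cat.
split.
  move=> x y vx vy; rewrite !hvl ?(vl_fsmul (M := M)) //.
  exact: valid_fsmul.
split; first by rewrite hvl.
split.
  move=> t t0; rewrite hvl.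
    by rewrite vl1 w1 mul1r.
  by move=> p; rewrite inE => /eqP -> /=.
move=> x y vx vy E.
have : vl w (rep (cls v iR M (x ++ y))) = vl w (rep (cls v iR M y)) by rewrite E.
rewrite !hvl ?vl_cat; last by apply/valid_cat.
  by move=> <-; rewrite le_max lexx.
by []. by [].
Qed.


Section Hom.
Variables (M : set R) (M1 : M 1) (hMm : forall a b, M a -> M b -> M (a * b)).
Variable f : {ptws bend v iR M -> K}.
Hypothesis hf : bend_hom f.

Definition fh (r : R) : K := f (cls v iR M [:: (1, r)]).

Lemma fh_ge0 r : 0 <= fh r.
Proof. by case: hf => h _; apply: h. Qed.

Lemma hom_single t r : 0 <= t -> M r -> f (cls v iR M [:: (t, r)]) = t * fh r.
Proof.
move=> t0 Mr; have [_ [_ [hmul [_ [hone _]]]]] := hf.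
have v1 : valid M [:: (t, 1)] by move=> p; rewrite inE => /eqP ->.
have v2 : valid M [:: ((1:K), r)] by move=> p; rewrite inE => /eqP -> /=.
have := hmul _ _ v1 v2; rewrite /fsmul /= mulr1 mul1r => ->.
by rewrite hone.
Qed.

Lemma hom_vl x : valid M x -> f (cls v iR M x) = vl fh x.
Proof.
have [_ [hadd [_ [h0 _]]]] := hf.
elim: x => [|p x IH] vx; first by rewrite h0.
have vx' : valid M x by move=> q hq; apply: vx; rewrite inE hq orbT.
have vp : valid M [:: p] by move=> q; rewrite inE => /eqP ->; apply: vx; rewrite inE eqxx.
rewrite -cat1s hadd // IH // vl_cat; congr Num.max.
have [p0 Mp] := vx p (mem_head _ _).
case: p p0 Mp {vx vp} => t r /= t0 Mr.
by rewrite hom_single // mulrC max_l // mulr_ge0 // fh_ge0.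
Qed.

Lemma fh1 : fh 1 = 1.
Proof. by have [_ [_ [_ [_ [hone _]]]]] := hf; rewrite /fh hone. Qed.

Lemma fh_mul a b : M a -> M b -> fh (a * b) = fh a * fh b.
Proof.
move=> Ma Mb; have [_ [_ [hmul _]]] := hf.
have va : valid M [:: ((1:K), a)] by move=> p; rewrite inE => /eqP ->.
have vb : valid M [:: ((1:K), b)] by move=> p; rewrite inE => /eqP ->.
by rewrite -(hmul _ _ va vb) /fsmul /= mulr1.
Qed.

Lemma fh_scal lam c : M c -> M (iR lam * c) -> fh (iR lam * c) = v lam * fh c.
Proof.
move=> Mc Mlc.
have e := @bc_scal K k v R iR M lam 1 c ler01 Mc Mlc.
have e' := cls_eq _ _ e.
rewrite /fh -e'.
all: try (move=> p; rewrite inE => /eqP -> /=).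
- by rewrite hom_single ?mulr1 // v_ge0.
- by rewrite mulr1 v_ge0.
- by [].
Qed.

Lemma fh_bend a bs : M a -> (forall b, b \in bs -> M b) ->
  a = \sum_(b <- bs) b -> fh a <= mxl fh bs.
Proof.
move=> Ma hbs e.
have [_ [_ [_ [_ [_ hord]]]]] := hf.
have vL : valid M [seq ((1:K), b) | b <- bs].
  by move=> p /mapP[b hb' ->] /=; split => //; apply: hbs.
have va : valid M [:: ((1:K), a)] by move=> p; rewrite inE => /eqP ->.
have := @bc_bend K k v R iR M 1 a bs ler01 Ma hbs e.
move=> /cls_eq E; rewrite /fh (le_trans (hord _ _ va vL _)) //.
- rewrite -E //; by move=> p; rewrite inE => /orP[/eqP -> //|/vL].
- rewrite hom_vl // /vl mxl_map /comp /=.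
  by rewrite le_eqVlt; apply/orP; left; apply/eqP; apply: mxl_eq => z _; rewrite mulr1.
Qed.

End Hom.

Lemma vlw_cls (M : set R) (w : R -> K) (x : fsum K R) :
  (forall a b, M a -> M b -> M (a * b)) -> berk v iR w -> valid M x ->
  vl w (rep (cls v iR M x)) = vl w x.
Proof.
move=> hMm bw; have bw' := bw.
move: bw' => [w0 [ww0 [w1 [wm [wu wc]]]]].
apply: vl_cls => //.
- by move=> lam c _ _; rewrite wm wc.
- by move=> a bs _ _ ->; apply: berk_ultra.
Qed.

Lemma vl_eq_in (h h' : R -> K) (x : fsum K R) :
  (forall p, p \in x -> h p.2 = h' p.2) -> vl h x = vl h' x.
Proof.
elim: x => [|p x IH] //= hx; rewrite /vl /= hx ?mem_head //.
by congr Num.max; apply: IH => q hq; apply: hx; rewrite inE hq orbT.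
Qed.

Lemma fh_berk (f : {ptws bend v iR setT -> K}) : bend_hom f ->
  berk v iR (fh f).
Proof.
move=> hf.
have hM : forall a b : R, setT a -> setT b -> setT (a * b) by [].
have hs : forall b : R, b \in ([::] : seq R) -> setT b by [].
have f0 : fh f 0 = 0.
  apply/le_anti; rewrite fh_ge0 // andbT.
  by have := fh_bend (I : setT 1) hf (I : setT 0) hs (esym (big_nil _ _ _ _)).
split; first by move=> r; apply: fh_ge0.
split => //; split; first exact: fh1.
split; first by move=> a b; apply: fh_mul.
split.
  move=> a b.
  have hs2 : forall c : R, c \in [:: a; b] -> setT c by [].
  have := fh_bend (I : setT 1) hf (I : setT (a + b)) hs2.
  rewrite big_cons big_cons big_nil addr0 => /(_ erefl) /le_trans; apply.
  by rewrite /= (@max_l _ _ (fh f b) 0) ?fh_ge0.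
move=> c; have := @fh_scal _ (I : setT 1) f hf c 1 I I.
by rewrite mulr1 => ->; rewrite (fh1 hf) mulr1.
Qed.

End BendGen.

Section Helpers.
Variable K : realType.
Implicit Types (E : set K) (a b c z : K).

Definition nnset E := (exists x, E x) /\ (forall x, E x -> 0 <= x).

Lemma nn_hasinf E : nnset E -> has_inf E.
Proof. by move=> [[x Ex] h]; split; [exists x|exists 0 => y /h]. Qed.

Lemma infP_le E e : nnset E -> E e -> inf E <= e.
Proof. by move=> /nn_hasinf [_ hl] Ee; apply: ge_inf. Qed.

Lemma le_infP E c : nnset E -> (forall e, E e -> c <= e) -> c <= inf E.
Proof. by move=> [ne _] h; apply: lb_le_inf. Qed.

Lemma inf_ge0 E : nnset E -> 0 <= inf E.
Proof. by move=> hE; apply: le_infP => // e; case: hE => _; apply. Qed.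

Lemma inf_apx E eps : nnset E -> 0 < eps -> exists2 e, E e & e < inf E + eps.
Proof. by move=> /nn_hasinf hE e0; apply: inf_adherent. Qed.

Lemma eps_le a b : (forall e, 0 < e -> a <= b + e) -> a <= b.
Proof. by move=> h; apply/ler_addgt0Pr. Qed.

Lemma eps_prod z a b : 0 <= a -> 0 <= b ->
  (forall e, 0 < e -> z <= (a + e) * (b + e)) -> z <= a * b.
Proof.
move=> a0 b0 h; apply: eps_le => d d0.
pose e := Num.min 1 (d / (a + b + 1)).
have hp : 0 < a + b + 1 by lra.
have e0 : 0 < e by rewrite lt_min ltr01 divr_gt0.
have e1 : e <= 1 by rewrite ge_min lexx.
have e2 : e <= d / (a + b + 1) by rewrite ge_min lexx orbT.
apply: le_trans (h e e0) _.
have -> : (a + e) * (b + e) = a * b + e * (a + b + e) by ring.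
rewrite lerD2l; apply: le_trans (_ : e * (a + b + 1) <= _).
  by apply: ler_wpM2l; [exact: ltW|rewrite lerD2l].
by rewrite -ler_pdivlMr.
Qed.

Lemma eps_scal z c a : 0 <= c -> 0 <= a ->
  (forall e, 0 < e -> z <= c * (a + e)) -> z <= c * a.
Proof.
move=> c0 a0 h; rewrite mulrC; apply: eps_prod => // e e0.
apply: le_trans (h e e0) _; rewrite [X in _ <= X]mulrC.
apply: ler_wpM2r; first by rewrite addr_ge0 // ltW.
by rewrite lerDl ltW.
Qed.

Lemma powle n (x y : K) : 0 <= x -> x <= y -> x ^+ n <= y ^+ n.
Proof. by move=> x0 xy; apply: lerXn2r => //; rewrite nnegrE // (le_trans x0). Qed.

Lemma bernoulli (d : K) n : 0 <= d -> 1 + n%:R * d <= (1 + d) ^+ n.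
Proof.
move=> d0; elim: n => [|n IH]; first by rewrite mul0r addr0 expr0.
rewrite exprS mulrC; apply: le_trans (_ : (1 + n%:R * d) * (1 + d) <= _).
  have -> : (1 + n%:R * d) * (1 + d) = 1 + n.+1%:R * d + n%:R * d * d.
    by rewrite mulrSr; ring.
  have h : 0 <= n%:R * d * d by rewrite !mulr_ge0.
  rewrite [d * _]mulrC; lra.
rewrite [X in _ <= X]mulrC; apply: ler_wpM2r => //; lra.
Qed.

End Helpers.

Lemma mxl_eq_in (K : realType) (T : eqType) (F G : T -> K) (s : seq T) :
  (forall x, x \in s -> F x = G x) -> mxl F s = mxl G s.
Proof.
elim: s => [|y s IH] //= h; rewrite h ?mem_head // IH // => x hx.
by apply: h; rewrite inE hx orbT.
Qed.

Lemma mxl_allpairs (K : realType) (S T U : Type) (f : S -> T -> U) (F : U -> K)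
  (s : seq S) (t : seq T) :
  mxl F [seq f a b | a <- s, b <- t] = mxl (fun a => mxl (fun b => F (f a b)) t) s.
Proof.
elim: s => [|a s IH] //; rewrite allpairs_cons mxl_cat IH mxl_map.
by [].
Qed.

Section Berk.
Variables (K : realType) (R : comPzRingType) (M : set R) (phi : R -> K).
Hypotheses (M0 : M 0) (M1 : M 1) (Mmul : forall x y, M x -> M y -> M (x * y))
  (phi_ge0 : forall m, M m -> 0 <= phi m) (phi1 : phi 1 = 1)
  (phi_mul : forall x y, M x -> M y -> phi (x * y) = phi x * phi y)
  (phi_bend : forall a bs, M a -> (forall b, b \in bs -> M b) ->
     a = \sum_(b <- bs) b -> phi a <= mxl phi bs)
  (span : forall r, exists L, (forall b, b \in L -> M b) /\ r = \sum_(b <- L) b).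

Lemma phi0 : phi 0 = 0.
Proof.
apply/le_anti; rewrite phi_ge0 // andbT.
have h : forall b, b \in ([::] : seq R) -> M b by [].
by have := phi_bend M0 h (esym (big_nil _ _ _ _)).
Qed.

Lemma Mexp x n : M x -> M (x ^+ n).
Proof. by move=> Mx; elim: n => [|n IH]; rewrite ?expr0 // exprS; apply: Mmul. Qed.

Lemma phi_exp x n : M x -> phi (x ^+ n) = phi x ^+ n.
Proof.
move=> Mx; elim: n => [|n IH]; rewrite ?expr0 // !exprS phi_mul ?IH //.
exact: Mexp.
Qed.

Definition isS (s : R -> K) :=
  [/\ forall x, 0 <= s x,
      forall x y, s (x + y) <= Num.max (s x) (s y),
      forall x y, s (x * y) <= s x * s y,
      s 1 = 1 &
      forall m y, M m -> s (m * y) = phi m * s y].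

Section SProps.
Variable s : R -> K.
Hypothesis hs : isS s.

Lemma S_ge0 x : 0 <= s x. Proof. by case: hs. Qed.
Lemma S_add x y : s (x + y) <= Num.max (s x) (s y). Proof. by case: hs. Qed.
Lemma S_mul x y : s (x * y) <= s x * s y. Proof. by case: hs. Qed.
Lemma S_1 : s 1 = 1. Proof. by case: hs. Qed.
Lemma S_M m y : M m -> s (m * y) = phi m * s y. Proof. by case: hs => _ _ _ _; apply. Qed.

Lemma S_0 : s 0 = 0.
Proof. by rewrite -(mul0r 0) S_M // phi0 mul0r. Qed.

Lemma S_exp x n : s (x ^+ n) <= s x ^+ n.
Proof.
elim: n => [|n IH]; first by rewrite !expr0 S_1.
rewrite !exprS; apply: le_trans (S_mul _ _) _.
by apply: ler_wpM2l; [exact: S_ge0|].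
Qed.

Lemma S_expM x a b : s (x ^+ (a * b)) <= s (x ^+ a) ^+ b.
Proof. by rewrite exprM; apply: S_exp. Qed.

Lemma S_muln x n : s (x *+ n) <= s x.
Proof.
elim: n => [|n IH]; first by rewrite mulr0n S_0 S_ge0.
by rewrite mulrS; apply: le_trans (S_add _ _) _; rewrite ge_max lexx.
Qed.

Lemma S_sum (I : Type) (r : seq I) (F : I -> R) B : 0 <= B ->
  (forall i, s (F i) <= B) -> s (\sum_(i <- r) F i) <= B.
Proof.
move=> B0 hF; elim: r => [|i r IH]; first by rewrite big_nil S_0.
by rewrite big_cons; apply: le_trans (S_add _ _) _; rewrite ge_max hF.
Qed.

End SProps.

Lemma mxl_mapM c L : M c -> (forall b, b \in L -> M b) ->
  mxl phi [seq c * b | b <- L] = phi c * mxl phi L.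
Proof.
move=> Mc hL; rewrite mxl_map -mxl_mull ?phi_ge0 //.
by apply: mxl_eq_in => b hb /=; rewrite phi_mul //; apply: hL.
Qed.

Lemma mxl_phi_ge0 L : 0 <= mxl phi L.
Proof. exact: mxl_ge0. Qed.

Definition Eset (r : R) : set K :=
  [set q | exists m L, [/\ M m, 0 < phi m, (forall b, b \in L -> M b),
     m * r = \sum_(b <- L) b & q = mxl phi L / phi m]].

Lemma Eset_nn r : nnset (Eset r).
Proof.
split.
  have [L [hL e]] := span r.
  exists (mxl phi L / phi 1); exists 1, L; split => //; first by rewrite phi1.
  by rewrite mul1r.
by move=> q [m [L [Mm pm hL e ->]]]; rewrite divr_ge0 ?mxl_ge0 ?ltW.
Qed.

Definition s0 (r : R) : K := inf (Eset r).

Lemma s0_1 : s0 1 = 1.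
Proof.
apply/le_anti/andP; split.
  apply: infP_le; first exact: Eset_nn.
  exists 1, [:: 1]; split => //; first by rewrite phi1.
  - by move=> b; rewrite inE => /eqP ->.
  - by rewrite big_cons big_nil addr0 mulr1.
  - by rewrite /= phi1 max_l // divr1.
apply: le_infP; first exact: Eset_nn.
move=> q [m [L [Mm pm hL e ->]]].
rewrite ler_pdivlMr // mul1r; apply: phi_bend => //.
by rewrite -e mulr1.
Qed.

Lemma maxdiv (a b c1 c2 : K) : 0 < c1 -> 0 < c2 ->
  Num.max (c2 * a) (c1 * b) / (c1 * c2) = Num.max (a / c1) (b / c2).
Proof.
move=> c10 c20; rewrite maxr_pMl ?invr_ge0 ?mulr_ge0 ?ltW //.
congr Num.max; field; apply/andP; split; rewrite gt_eqF //.
Qed.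

Lemma s0_add x y : s0 (x + y) <= Num.max (s0 x) (s0 y).
Proof.
apply: eps_le => e e0.
have [q1 [m1 [L1 [M1' p1 h1 e1 ->]]] lt1] := inf_apx (Eset_nn x) e0.
have [q2 [m2 [L2 [M2' p2 h2 e2 ->]]] lt2] := inf_apx (Eset_nn y) e0.
apply: le_trans (_ : Num.max (mxl phi L1 / phi m1) (mxl phi L2 / phi m2) <= _).
  apply: infP_le; first exact: Eset_nn.
  exists (m1 * m2), ([seq m2 * b | b <- L1] ++ [seq m1 * b | b <- L2]); split.
  - exact: Mmul.
  - by rewrite phi_mul // mulr_gt0.
  - move=> b; rewrite mem_cat => /orP[] /mapP[c hc ->]; apply: Mmul => //.
      exact: h1.
    exact: h2.
  - rewrite big_cat !big_map -!big_distrr /= -e1 -e2 mulrDr; congr (_ + _).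
      by rewrite mulrCA mulrA.
    by rewrite mulrA.
  - rewrite mxl_cat !mxl_mapM // phi_mul // maxdiv //.
by rewrite addr_maxl ge_max !le_max (ltW lt1) (ltW lt2) orbT.
Qed.

Lemma s0_ge0 x : 0 <= s0 x.
Proof. exact/inf_ge0/Eset_nn. Qed.

Lemma s0_mul x y : s0 (x * y) <= s0 x * s0 y.
Proof.
apply: eps_prod; try exact: s0_ge0.
move=> e e0.
have [q1 [m1 [L1 [M1' p1 h1 e1 ->]]] lt1] := inf_apx (Eset_nn x) e0.
have [q2 [m2 [L2 [M2' p2 h2 e2 ->]]] lt2] := inf_apx (Eset_nn y) e0.
apply: le_trans (_ : (mxl phi L1 / phi m1) * (mxl phi L2 / phi m2) <= _); last first.
  apply: ler_pM; [exact: divr_ge0 (mxl_ge0 _ _) (ltW p1)|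
    exact: divr_ge0 (mxl_ge0 _ _) (ltW p2)|exact: ltW|exact: ltW].
apply: infP_le; first exact: Eset_nn.
exists (m1 * m2), [seq a * b | a <- L1, b <- L2]; split.
- exact: Mmul.
- by rewrite phi_mul // mulr_gt0.
- by move=> b /allpairsP[[a c] [/= ha hc ->]]; apply: Mmul; [apply: h1|apply: h2].
- rewrite big_allpairs_dep /= -[m1 * m2 * (x * y)]/(m1 * m2 * (x * y)).
  have -> : m1 * m2 * (x * y) = (m1 * x) * (m2 * y).
    by rewrite -!mulrA; congr (_ * _); rewrite mulrCA.
  by rewrite e1 e2 big_distrlr.
- rewrite mxl_allpairs.
  have -> : mxl (fun a => mxl (fun b => phi (a * b)) L2) L1 =
            mxl (fun a => phi a * mxl phi L2) L1.
    apply: mxl_eq_in => a ha; rewrite -mxl_mull; last by apply/phi_ge0/h1.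
    by apply: mxl_eq_in => b hb; rewrite phi_mul //; [apply: h1|apply: h2].
  have -> : mxl (fun a => phi a * mxl phi L2) L1 = mxl phi L1 * mxl phi L2.
    by rewrite mulrC -mxl_mull ?mxl_ge0 //; apply: mxl_eq => z _; rewrite mulrC.
  rewrite phi_mul // invfM; ring.
Qed.

Lemma s0_M m y : M m -> s0 (m * y) = phi m * s0 y.
Proof.
move=> Mm.
have le1 : s0 (m * y) <= phi m * s0 y.
  apply: eps_scal; rewrite ?phi_ge0 ?s0_ge0 // => e e0.
  have [q1 [m1 [L1 [M1' p1 h1 e1 ->]]] lt1] := inf_apx (Eset_nn y) e0.
  apply: le_trans (_ : phi m * (mxl phi L1 / phi m1) <= _); last first.
    by apply: ler_wpM2l; rewrite ?phi_ge0 ?ltW.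
  apply: infP_le; first exact: Eset_nn.
  exists m1, [seq m * b | b <- L1]; split => //.
  - by move=> b /mapP[c hc ->]; apply: Mmul => //; apply: h1.
  - by rewrite big_map -big_distrr /= -e1 mulrCA.
  - by rewrite mxl_mapM // mulrA.
have [p0|p0] := eqVneq (phi m) 0.
  rewrite p0 mul0r; apply/le_anti; rewrite s0_ge0 andbT.
  by move: le1; rewrite p0 mul0r.
have pm : 0 < phi m by rewrite lt_def p0 phi_ge0.
apply/le_anti; rewrite le1 /=.
apply: le_infP; first exact: Eset_nn.
move=> q [m1 [L1 [M1' p1 h1 e1 ->]]].
rewrite mulrC -ler_pdivlMr //.
apply: infP_le; first exact: Eset_nn.
exists (m1 * m), L1; split => //.
- exact: Mmul.
- by rewrite phi_mul // mulr_gt0.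
- by rewrite -mulrA.
- by rewrite phi_mul // invfM mulrA.
Qed.

Lemma seedS : isS s0.
Proof.
split.
- exact: s0_ge0.
- exact: s0_add.
- exact: s0_mul.
- exact: s0_1.
- exact: s0_M.
Qed.

Definition infS (A : set (R -> K)) (x : R) : K := inf [set s x | s in A].

Section Chain.
Variable A : set (R -> K).
Hypotheses (An : exists s, A s) (AS : forall s, A s -> isS s)
  (Atot : forall s t, A s -> A t -> (forall x, s x <= t x) \/ (forall x, t x <= s x)).

Lemma chain_nn x : nnset [set s x | s in A].
Proof.
split; first by case: An => s As; exists (s x), s.
by move=> q [s As <-]; apply: S_ge0; apply: AS.
Qed.

Lemma chain_common s1 s2 : A s1 -> A s2 ->
  exists2 s3, A s3 & forall x, s3 x <= s1 x /\ s3 x <= s2 x.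
Proof.
move=> A1 A2; case: (Atot A1 A2) => h.
  by exists s1 => // x; rewrite lexx h.
by exists s2 => // x; rewrite lexx h.
Qed.

Lemma infS_le s x : A s -> infS A x <= s x.
Proof. by move=> As; apply: infP_le; [exact: chain_nn|exists s]. Qed.

Lemma infS_ge0 x : 0 <= infS A x.
Proof. exact/inf_ge0/chain_nn. Qed.

Lemma infS_apx x e : 0 < e -> exists2 s, A s & s x < infS A x + e.
Proof.
by move=> e0; have [q [s As <-] lt] := inf_apx (chain_nn x) e0; exists s.
Qed.

Lemma chainS : isS (infS A).
Proof.
split.
- exact: infS_ge0.
- move=> x y; apply: eps_le => e e0.
  have [s1 A1 l1] := infS_apx x e0; have [s2 A2 l2] := infS_apx y e0.
  have [s3 A3 h3] := chain_common A1 A2.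
  apply: le_trans (infS_le _ A3) _.
  apply: le_trans (S_add (AS A3) _ _) _.
  rewrite addr_maxl ge_max !le_max.
  have [h3x _] := h3 x; have [_ h3y] := h3 y.
  by rewrite (le_trans h3x (ltW l1)) (le_trans h3y (ltW l2)) orbT.
- move=> x y; apply: eps_prod; try exact: infS_ge0.
  move=> e e0.
  have [s1 A1 l1] := infS_apx x e0; have [s2 A2 l2] := infS_apx y e0.
  have [s3 A3 h3] := chain_common A1 A2.
  apply: le_trans (infS_le _ A3) _.
  apply: le_trans (S_mul (AS A3) _ _) _.
  have [h3x _] := h3 x; have [_ h3y] := h3 y.
  by apply: ler_pM; rewrite ?(S_ge0 (AS A3)) ?(le_trans h3x (ltW l1)) ?(le_trans h3y (ltW l2)).
- apply/le_anti/andP; split.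
    by case: An => s As; apply: le_trans (infS_le _ As) _; rewrite (S_1 (AS As)).
  by apply: le_infP; [exact: chain_nn|move=> q [s As <-]; rewrite (S_1 (AS As))].
- move=> m y Mm; apply/le_anti/andP; split.
    apply: eps_scal; rewrite ?phi_ge0 ?infS_ge0 // => e e0.
    have [s1 A1 l1] := infS_apx y e0.
    apply: le_trans (infS_le _ A1) _; rewrite (S_M (AS A1)) //.
    by apply: ler_wpM2l; rewrite ?phi_ge0 ?ltW.
  apply: le_infP; first exact: chain_nn.
  move=> q [s As <-]; rewrite (S_M (AS As)) //.
  by apply: ler_wpM2l; rewrite ?phi_ge0 ?infS_le.
Qed.
End Chain.

Lemma minimal_exists : exists s, isS s /\
  forall t, isS t -> (forall x, t x <= s x) -> t = s.
Proof.
pose T := {s : R -> K | isS s}.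
pose Rl := fun a b : T => `[< forall x, proj1_sig b x <= proj1_sig a x >].
have := @Zorn T Rl.
case.
- by move=> t; apply/asboolP => x.
- move=> r s t /asboolP h1 /asboolP h2; apply/asboolP => x.
  exact: le_trans (h2 x) (h1 x).
- move=> s t /asboolP h1 /asboolP h2; apply: sig_eq; apply/funext => x.
  by apply/le_anti; rewrite h1 h2.
- move=> A Atot.
  have [An|A0] := pselect (exists t, A t); last first.
    exists (exist _ s0 seedS) => s As; exfalso; apply: A0; by exists s.
  pose A' := [set proj1_sig t | t in A].
  have An' : exists s, A' s by case: An => t At; exists (proj1_sig t), t.
  have AS' : forall s, A' s -> isS s by move=> s [t At <-]; exact: (proj2_sig t).
  have Atot' : forall s t, A' s -> A' t ->
      (forall x, s x <= t x) \/ (forall x, t x <= s x).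
    move=> s t [s' As' <-] [t' At' <-].
    by case: (Atot _ _ As' At') => /asboolP h; [right|left].
  exists (exist _ (infS A') (chainS An' AS' Atot')) => s As.
  by apply/asboolP => x /=; apply: (@infS_le A' An' AS' (proj1_sig s) x); exists s.

- move=> t ht; exists (proj1_sig t); split; first exact: (proj2_sig t).
  move=> u uS ule.
  have := ht (exist _ u uS); rewrite /Rl /=.
  by move=> /(_ (asboolT ule)) <-.
Qed.

Section Rho.
Variable s : R -> K.
Hypothesis hs : isS s.

Definition Tset (x : R) : set K :=
  [set t | 0 <= t /\ exists n, s (x ^+ n.+1) <= t ^+ n.+1].
Definition rho (x : R) : K := inf (Tset x).

Lemma T_nn x : nnset (Tset x).
Proof.
split; last by move=> t [].
exists (s x); split; first exact: S_ge0.
by exists 0%N; rewrite !expr1.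
Qed.

Lemma rho_ge0 x : 0 <= rho x.
Proof. exact/inf_ge0/T_nn. Qed.

Lemma rho_le x t : Tset x t -> rho x <= t.
Proof. by move=> h; apply: infP_le => //; exact: T_nn. Qed.

Lemma rho_le_s x : rho x <= s x.
Proof.
apply: rho_le; split; first exact: S_ge0.
by exists 0%N; rewrite !expr1.
Qed.

Lemma T_up x t : rho x < t -> Tset x t.
Proof.
move=> lt; have e0 : 0 < t - rho x by rewrite subr_gt0.
have [t' [t0 [n hn]] lt'] := inf_apx (T_nn x) e0.
have tt : t' <= t by move: lt'; rewrite -/(rho x) addrC subrK => /ltW.
split; first exact: le_trans tt.
by exists n; apply: le_trans hn (powle _ t0 tt).
Qed.

Lemma s_pow_M m y n : M m -> s ((m * y) ^+ n) = phi m ^+ n * s (y ^+ n).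
Proof.
by move=> Mm; rewrite exprMn (S_M hs) ?phi_exp //; exact: Mexp.
Qed.

Lemma rho_1 : rho 1 = 1.
Proof.
apply/le_anti/andP; split.
  apply: rho_le; split => //; exists 0%N; by rewrite expr1n (S_1 hs) expr1n.
apply: le_infP; first exact: T_nn.
move=> t [t0 [n hn]]; rewrite expr1n (S_1 hs) in hn.
rewrite leNgt; apply/negP => t1.
by move: hn; rewrite leNgt exprn_ilt1.
Qed.

Lemma rho_M m y : M m -> rho (m * y) = phi m * rho y.
Proof.
move=> Mm.
have le1 : rho (m * y) <= phi m * rho y.
  apply: eps_scal; rewrite ?phi_ge0 ?rho_ge0 // => e e0.
  have [t [t0 [n hn]] lt] := inf_apx (T_nn y) e0.
  apply: le_trans (_ : phi m * t <= _); last by rewrite ler_wpM2l ?phi_ge0 ?ltW.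
  apply: rho_le; split; first by rewrite mulr_ge0 ?phi_ge0.
  exists n; rewrite s_pow_M // exprMn ler_wpM2l //.
  by rewrite exprn_ge0 ?phi_ge0.
have [p0|p0] := eqVneq (phi m) 0.
  rewrite p0 mul0r; apply/le_anti; rewrite rho_ge0 andbT.
  by move: le1; rewrite p0 mul0r.
have pm : 0 < phi m by rewrite lt_def p0 phi_ge0.
apply/le_anti; rewrite le1 /=.
apply: le_infP; first exact: T_nn.
move=> t [t0 [n hn]].
rewrite mulrC -ler_pdivlMr //; apply: rho_le; split.
  by rewrite divr_ge0 // ltW.
exists n; rewrite expr_div_n ler_pdivlMr ?exprn_gt0 // mulrC -s_pow_M //.
Qed.

Lemma rho_mul x y : rho (x * y) <= rho x * rho y.
Proof.
apply: eps_prod; rewrite ?rho_ge0 // => e e0.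
have [t1 [t10 [n1 h1]] lt1] := inf_apx (T_nn x) e0.
have [t2 [t20 [n2 h2]] lt2] := inf_apx (T_nn y) e0.
apply: le_trans (_ : t1 * t2 <= _); last by apply: ler_pM => //; apply: ltW.
apply: rho_le; split; first by rewrite mulr_ge0.
pose N := (n1.+1 * n2.+1)%N.
have hx : s (x ^+ N) <= t1 ^+ N.
  apply: le_trans (S_expM hs _ _ _) _.
  rewrite /N exprM; apply: powle => //; exact: S_ge0.
have hy : s (y ^+ N) <= t2 ^+ N.
  rewrite /N mulnC; apply: le_trans (S_expM hs _ _ _) _.
  rewrite exprM; apply: powle => //; exact: S_ge0.
have NS : N = N.-1.+1 by rewrite prednK // muln_gt0.
exists N.-1; rewrite -NS exprMn.
apply: le_trans (S_mul hs _ _) _.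
by rewrite exprMn; apply: ler_pM => //; exact: S_ge0.
Qed.

Lemma bound_pow z g N0 : 0 < g -> (0 < N0)%N -> s (z ^+ N0) <= g ^+ N0 ->
  exists2 C, 0 <= C & forall i, s (z ^+ i) <= C * g ^+ i.
Proof.
move=> g0 N00 hN.
pose C := \sum_(r < N0) s (z ^+ r) / g ^+ r.
have C0 : 0 <= C by apply: sumr_ge0 => r _; rewrite divr_ge0 ?S_ge0 ?exprn_ge0 ?ltW.
exists C => // i; elim/ltn_ind: i => i IH.
have [iN|iN] := ltnP i N0.
  have -> : s (z ^+ i) = (s (z ^+ i) / g ^+ i) * g ^+ i.
    by rewrite divfK // expf_neq0 // gt_eqF.
  apply: ler_wpM2r; first by rewrite exprn_ge0 ?ltW.
  rewrite /C (bigD1 (Ordinal iN)) //= lerDl.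
  by apply: sumr_ge0 => r _; rewrite divr_ge0 ?S_ge0 ?exprn_ge0 ?ltW.
have -> : i = (N0 + (i - N0))%N by rewrite subnKC.
rewrite exprD; apply: le_trans (S_mul hs _ _) _.
have := IH (i - N0)%N; rewrite ltn_subrL N00 /= => /(_ (leq_trans N00 iN)) h.
rewrite exprD mulrCA; apply: ler_pM => //; rewrite ?S_ge0 //.
Qed.

Lemma s_binom x y N B1 B2 g : 0 <= B1 -> 0 <= B2 -> 0 <= g ->
  (forall i, s (x ^+ i) <= B1 * g ^+ i) -> (forall i, s (y ^+ i) <= B2 * g ^+ i) ->
  s ((x + y) ^+ N) <= B1 * B2 * g ^+ N.
Proof.
move=> B10 B20 g0 hx hy; rewrite exprDn; apply: S_sum => //.
  by rewrite !mulr_ge0 // exprn_ge0.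
move=> i; apply: le_trans (S_muln hs _ _) _.
apply: le_trans (S_mul hs _ _) _.
apply: le_trans (_ : (B1 * g ^+ (N - i)) * (B2 * g ^+ i) <= _).
  by apply: ler_pM; rewrite ?S_ge0.
rewrite mulrACA -exprD subnK //; last by rewrite -ltnS ltn_ord.
Qed.

Lemma rho_add x y : rho (x + y) <= Num.max (rho x) (rho y).
Proof.
set mu := Num.max (rho x) (rho y).
have mu0 : 0 <= mu by rewrite le_max rho_ge0.
apply: eps_le => e e0.
pose g := mu + e / 2.
have e20 : 0 < e / 2 by rewrite divr_gt0.
have g0 : 0 < g by rewrite /g ltr_wpDl.
have gx : rho x < g by rewrite /g ltr_pwDr // le_max lexx.
have gy : rho y < g by rewrite /g ltr_pwDr // le_max lexx orbT.
have [_ [n1 h1]] := T_up gx; have [_ [n2 h2]] := T_up gy.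
pose N0 := (n1.+1 * n2.+1)%N.
have N00 : (0 < N0)%N by rewrite muln_gt0.
have hx : s (x ^+ N0) <= g ^+ N0.
  apply: le_trans (S_expM hs _ _ _) _.
  rewrite /N0 exprM; apply: powle => //; exact: S_ge0.
have hy : s (y ^+ N0) <= g ^+ N0.
  rewrite /N0 mulnC; apply: le_trans (S_expM hs _ _ _) _.
  rewrite exprM; apply: powle => //; exact: S_ge0.
have [C1 C10 hC1] := bound_pow g0 N00 hx.
have [C2 C20 hC2] := bound_pow g0 N00 hy.
have hxy : forall N, s ((x + y) ^+ N) <= C1 * C2 * g ^+ N.
  by move=> N; apply: s_binom => //; apply: ltW.
have rg : rho (x + y) <= g.
  apply: eps_le => d d0.
  pose D := C1 * C2.
  have D0 : 0 <= D by rewrite mulr_ge0.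
  pose dd := d / g.
  have dd0 : 0 < dd by rewrite divr_gt0.
  pose n := Num.Def.archi_bound (D / dd).
  have hn : D / dd < n%:R by apply: archi_boundP; rewrite divr_ge0 // ltW.
  have hD : D <= (1 + dd) ^+ n.+1.
    apply: le_trans (bernoulli n.+1 (ltW dd0)).
    move: hn; rewrite ltr_pdivrMr // => /ltW h.
    apply: le_trans h _; rewrite -natr1 mulrDl mul1r.
    have := ltW dd0; set a := n%:R * dd; lra.
  apply: rho_le; split; first by rewrite addr_ge0 ?ltW.
  exists n; apply: le_trans (hxy _) _.
  have -> : g + d = g * (1 + dd) by rewrite /dd mulrDr mulr1 mulrCA divff ?mulr1 // gt_eqF.
  rewrite exprMn mulrC; apply: ler_wpM2l => //.
  by rewrite exprn_ge0 // ltW.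
apply: le_trans rg _; rewrite /g lerD2l ler_pdivrMr // ler_pMr //.
by rewrite ler1n.
Qed.

Lemma rhoS : isS rho.
Proof.
split.
- exact: rho_ge0.
- exact: rho_add.
- exact: rho_mul.
- exact: rho_1.
- exact: rho_M.
Qed.
End Rho.

Section Min.
Variable s : R -> K.
Hypotheses (hs : isS s) (hmin : forall t, isS t -> (forall x, t x <= s x) -> t = s).

Lemma rho_eq : rho s = s.
Proof. apply: hmin; [exact: rhoS|exact: rho_le_s]. Qed.

Lemma s_sq x : s (x ^+ 2) = s x ^+ 2.
Proof.
apply/le_anti; rewrite S_exp //=.
set t := Num.sqrt (s (x ^+ 2)).
have t0 : 0 <= t by rewrite sqrtr_ge0.
have ht : t ^+ 2 = s (x ^+ 2) by rewrite sqr_sqrtr // S_ge0.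
have : rho s x <= t.
  by apply: rho_le => //; split => //; exists 1%N; rewrite ht.
rewrite rho_eq => h; rewrite -ht; apply: powle => //; exact: S_ge0.
Qed.

Lemma s_pow2 x k : s (x ^+ (2 ^ k)) = s x ^+ (2 ^ k).
Proof.
elim: k => [|k IH]; first by rewrite expn0 !expr1.
by rewrite expnSr !exprM s_sq IH.
Qed.

Lemma s_pow x n : s (x ^+ n) = s x ^+ n.
Proof.
apply/le_anti; rewrite S_exp //=.
have [r0|r0] := eqVneq (s x) 0.
  case: n => [|n]; first by rewrite !expr0 (S_1 hs).
  by rewrite r0 expr0n /= S_ge0.
have rp : 0 < s x by rewrite lt_def r0 S_ge0.
have hn : (n <= 2 ^ n)%N by apply: ltnW; apply: ltn_expl.
have := s_pow2 x n; rewrite -(subnK hn) !exprD => e.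
have : s x ^+ (2 ^ n - n) * s x ^+ n <= s (x ^+ n) * s x ^+ (2 ^ n - n).
  rewrite -e; apply: le_trans (S_mul hs _ _) _; rewrite mulrC.
  by apply: ler_wpM2l; [exact: S_ge0|exact: S_exp].
by rewrite mulrC ler_pM2r // exprn_gt0.
Qed.

Section Prime.
Variable x : R.
Hypothesis rp : 0 < s x.
Let r := s x.

Definition aset (g : R) : set K := [set q | exists n, q = s (x ^+ n * g) / r ^+ n].
Definition sp (g : R) : K := inf (aset g).

Lemma a_nn g : nnset (aset g).
Proof.
split; first by exists (s (x ^+ 0 * g) / r ^+ 0), 0%N.
by move=> q [n ->]; rewrite divr_ge0 ?S_ge0 ?exprn_ge0 ?ltW.
Qed.

Lemma sp_le g n : sp g <= s (x ^+ n * g) / r ^+ n.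
Proof. by apply: infP_le; [exact: a_nn|exists n]. Qed.

Lemma sp_ge0 g : 0 <= sp g.
Proof. exact/inf_ge0/a_nn. Qed.

Lemma sp_apx g e : 0 < e -> exists n, s (x ^+ n * g) / r ^+ n < sp g + e.
Proof. by move=> e0; have [q [n ->] lt] := inf_apx (a_nn g) e0; exists n. Qed.

Lemma a_step g n : s (x ^+ n.+1 * g) / r ^+ n.+1 <= s (x ^+ n * g) / r ^+ n.
Proof.
rewrite exprS -mulrA ler_pdivrMr ?exprn_gt0 //.
apply: le_trans (S_mul hs _ _) _.
rewrite exprS mulrCA divfK ?expf_neq0 ?gt_eqF //.
Qed.

Lemma a_mono g n m : (n <= m)%N -> s (x ^+ m * g) / r ^+ m <= s (x ^+ n * g) / r ^+ n.
Proof.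
move=> /subnK <-; elim: (m - n)%N => [|d IH]; first by rewrite add0n.
by rewrite addSn; apply: le_trans (a_step _ _) IH.
Qed.

Lemma spS : isS sp.
Proof.
split.
- exact: sp_ge0.
- move=> g h; apply: eps_le => e e0.
  have [n1 l1] := sp_apx g e0; have [n2 l2] := sp_apx h e0.
  apply: le_trans (sp_le _ (n1 + n2)) _.
  rewrite mulrDr.
  apply: le_trans (ler_wpM2r _ (S_add hs _ _)) _.
    by rewrite invr_ge0 exprn_ge0 // ltW.
  rewrite maxr_pMl ?invr_ge0 ?exprn_ge0 ?ltW // addr_maxl gt_max !lt_max.
  have m1 := a_mono g (leq_addr n2 n1); have m2 := a_mono h (leq_addl n1 n2).
  by rewrite (le_lt_trans m1 l1) (le_lt_trans m2 l2) orbT.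
- move=> g h; apply: eps_prod; rewrite ?sp_ge0 // => e e0.
  have [n1 l1] := sp_apx g e0; have [n2 l2] := sp_apx h e0.
  apply: le_trans (sp_le _ (n1 + n2)) _.
  apply: le_trans (_ : (s (x ^+ n1 * g) / r ^+ n1) * (s (x ^+ n2 * h) / r ^+ n2) <= _);
    last by apply: ler_pM; rewrite ?divr_ge0 ?S_ge0 ?exprn_ge0 ?ltW.
  rewrite !exprD invfM mulrACA [X in _ <= X]mulrACA.
  apply: ler_wpM2r; last exact: S_mul.
  by rewrite mulr_ge0 // invr_ge0 exprn_ge0 // ltW.
- apply/le_anti/andP; split.
    by apply: le_trans (sp_le _ 0) _; rewrite expr0 mul1r (S_1 hs) expr0 divr1.
  apply: le_infP; first exact: a_nn.
  move=> q [n ->]; rewrite mulr1 s_pow divff // expf_neq0 // gt_eqF //.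
- move=> m y Mm; apply/le_anti/andP; split.
    apply: eps_scal; rewrite ?phi_ge0 ?sp_ge0 // => e e0.
    have [n l] := sp_apx y e0.
    apply: le_trans (sp_le _ n) _.
    rewrite mulrCA (S_M hs) // -mulrA; apply: ler_wpM2l; rewrite ?phi_ge0 ?ltW //.
  apply: le_infP; first exact: a_nn.
  move=> q [n ->]; rewrite mulrCA (S_M hs) // -mulrA.
  by apply: ler_wpM2l; rewrite ?phi_ge0 ?sp_le.
Qed.

Lemma sp_le_s g : sp g <= s g.
Proof. by apply: le_trans (sp_le _ 0) _; rewrite expr0 mul1r expr0 divr1. Qed.

Lemma s_mul_ge g : s x * s g <= s (x * g).
Proof.
have E := hmin spS sp_le_s.
rewrite -E; apply: le_infP; first exact: a_nn.
move=> q [n ->].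
have := sp_le g n.+1; rewrite E.
rewrite exprSr -mulrA ler_pdivlMr ?exprn_gt0 // exprSr mulrA.
move=> h; rewrite ler_pdivlMr ?exprn_gt0 //; apply: le_trans h.
rewrite le_eqVlt; apply/orP; left; apply/eqP; rewrite /r; ring.
Qed.

End Prime.

Lemma s_mult x y : s (x * y) = s x * s y.
Proof.
apply/le_anti; rewrite S_mul //=.
have [r0|r0] := eqVneq (s x) 0.
  by rewrite r0 mul0r S_ge0.
by apply: s_mul_ge; rewrite lt_def r0 S_ge0.
Qed.

End Min.

Theorem berk_exists : exists w : R -> K,
  [/\ forall x, 0 <= w x, w 1 = 1, forall x y, w (x * y) = w x * w y,
      forall x y, w (x + y) <= Num.max (w x) (w y) &
      forall m, M m -> w m = phi m].
Proof.
have [s [hs hmin]] := minimal_exists.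
exists s; split.
- exact: S_ge0.
- exact: S_1.
- exact: s_mult.
- exact: S_add.
- by move=> m Mm; have := S_M hs 1 Mm; rewrite mulr1 (S_1 hs) mulr1.
Qed.

End Berk.

Lemma ev_cont (I : Type) (K : realType) (i : I) :
  continuous (fun g : {ptws I -> K} => g i).
Proof.
pose J : eqType := HB.pack_for eqType I (gen_eqMixin I).
exact: (@proj_continuous J (fun _ => K) i).
Qed.

Lemma into_ptws (X : topologicalType) (I : Type) (K : realType)
   (h : X -> {ptws I -> K}) :
  (forall i, continuous (fun x => h x i)) -> continuous h.
Proof.
move=> hc x; rewrite /continuous_at.
apply/cvg_sup => i A /=.
rewrite nbhsE => -[B [[C oC <-] Cx] BA].
have hC : nbhs x ((fun y => h y i) @^-1` C).
  by apply: (hc i x); apply: open_nbhs_nbhs.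
move: hC; rewrite nbhsE => -[B0 oB0 sub]; exists B0 => // y /sub Cy; exact: BA.
Qed.

Lemma cont_mxl (X : topologicalType) (K : realType) (T : Type) (F : T -> X -> K)
  (L : seq T) : (forall p, continuous (F p)) ->
  continuous (fun x => mxl (fun p => F p x) L).
Proof.
move=> hF; elim: L => [|p L IH] /=.
  by move=> x; apply: cvg_cst.
move=> x; apply: (@continuous_max _ _ (F p) (fun x => mxl (fun p => F p x) L)).
  exact: hF.
exact: IH.
Qed.

Lemma cont_mulr (X : topologicalType) (K : realType) (f : X -> K) (c : K) :
  continuous f -> continuous (fun x => f x * c).
Proof. by move=> hf x; apply: cvgMr_tmp; apply: hf. Qed.

Lemma inA_add n (gens : seq 'rV[int]_n) a b :
  inA gens a -> inA gens b -> inA gens (a + b).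
Proof.
move=> ha; elim=> [|b' g _ IH hg]; first by rewrite addr0.
by rewrite addrA; apply: inA_S.
Qed.

Lemma in_map_P (T : Type) (U : eqType) (f : T -> U) (Q : U -> Prop) (s : seq T) :
  (forall a, Q (f a)) -> forall b, b \in map f s -> Q b.
Proof.
move=> hQ; elim: s => [|a s IH] b //=; rewrite inE => /orP[/eqP ->|/IH //].
exact: hQ.
Qed.

Unset Implicit Arguments.
Set Strict Implicit.

Theorem theoremC (K : realType) (k : fieldType) (v : k -> K)
  (hv : nonarch_abs v)
  (n : nat) (gens : seq 'rV[int]_n)
  (P : comPzRingType) (iP : {rmorphism k -> P}) (e : A0 gens -> P)
  (he : is_monoid_algebra iP e)
  (R : comPzRingType) (iR : {rmorphism k -> R})
  (pi : {rmorphism P -> R}) (hpik : forall c, pi (iP c) = iR c)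
  (hpis : forall r : R, exists p : P, pi p = r) :
  let Yan := [set w : {ptws R -> K} | berk v iR w] in
  let trop := tropKP (K := K) pi e in
  let Trop := trop @` Yan in
  let MB := Bbullet iP pi e in
  let HomR := [set f : {ptws bend v iR setT -> K} | bend_hom f] in
  let HomB := [set f : {ptws bend v iR MB -> K} | bend_hom f] in
  let Psi := fun f : {ptws bend v iR MB -> K} =>
    ((fun a : A0 gens => f (cls v iR MB [:: (1, pi (e a))])) : {ptws A0 gens -> K}) in
  let pre := fun f : {ptws bend v iR setT -> K} =>
    ((fun X : bend v iR MB => f (bend_incl X)) : {ptws bend v iR MB -> K}) in
  (exists Phi : {ptws R -> K} -> {ptws bend v iR setT -> K},
     [/\ homeo_on Yan HomR Phi,
         (forall w, Yan w -> forall (r : R) (t : K), 0 <= t ->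
            Phi w (cls v iR setT [:: (t, r)]) = w r * t) &
         (forall w, Yan w -> trop w = Psi (pre (Phi w)))])
  /\ homeo_on HomB Trop Psi
  /\ ((forall w, Yan w -> Trop (trop w)) /\ {within Yan, continuous trop})
  /\ ((forall f, HomR f -> HomB (pre f)) /\ {within HomR, continuous pre}).
Proof.
move=> Yan trop Trop MB HomR HomB Psi pre.
have [he0 he1 heM hespan heind] := he.
pose one : A0 gens := exist _ (Some 0) (inA_0 gens).
have e1 : e one = 1 by apply: he1.
have MBmul : forall x y, MB x -> MB y -> MB (x * y).
  move=> x y [c [a ->]] [c' [a' ->]].
  have hz : inA0 gens (mulA0 (proj1_sig a) (proj1_sig a')).
    case: a a' => [[a|] ha] [[a'|] ha'] //=; exact: inA_add.
  pose z : A0 gens := exist _ _ hz.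
  exists (c * c'), z; rewrite (heM a a' z) //.
  have -> : iP (c * c') * (e a * e a') = (iP c * e a) * (iP c' * e a').
    by rewrite rmorphM -!mulrA; congr (_ * _); rewrite mulrCA.
  by rewrite [RHS]rmorphM.
have MB1 : MB 1 by exists 1, one; rewrite rmorph1 e1 mulr1 rmorph1.
have MB0 : MB 0 by exists 0, one; rewrite rmorph0 mul0r rmorph0.
have MBe : forall a, MB (pi (e a)) by move=> a; exists 1, a; rewrite rmorph1 mul1r.
have MBiR : forall c, MB (iR c) by move=> c; exists c, one; rewrite e1 mulr1 hpik.
have MBT : MB `<=` setT by [].
have Tmul : forall a b : R, setT a -> setT b -> setT (a * b) by [].
have span : forall r : R, exists L, (forall b, b \in L -> MB b) /\ r = \sum_(b <- L) b.
  move=> r; have [p <-] := hpis r; have [s [c ->]] := hespan p.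
  exists [seq pi (iP (c a) * e a) | a <- s]; split.
    by apply: in_map_P => a; exists (c a), a.
  by rewrite big_map rmorph_sum.
pose Phi := fun w : {ptws R -> K} => @Fw K k v R iR setT w.
have Phi_cls : forall w, Yan w -> forall x, valid setT x ->
    Phi w (cls v iR setT x) = vl w x.
  by move=> w bw x vx; rewrite /Phi /Fw (vlw_cls hv Tmul bw vx).
have vT : forall (x : fsum K R), valid setT x <-> (forall p, p \in x -> 0 <= p.1).
  by move=> x; split=> h p /h // [].
have v1 : forall (t : K) (r : R), 0 <= t -> valid setT [:: (t, r)].
  by move=> t r t0 p; rewrite inE => /eqP ->.
have vB1 : forall (t : K) (r : R), 0 <= t -> MB r -> valid MB [:: (t, r)].
  by move=> t r t0 Mr p; rewrite inE => /eqP ->.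
have Phi_cont : continuous Phi.
  apply: into_ptws => X; rewrite /Phi /Fw /vl.
  apply: cont_mxl => p; apply: cont_mulr; exact: ev_cont.
have bw0 : forall w, Yan w -> forall r, 0 <= w r by move=> w [].
have part1 : exists Phi0 : {ptws R -> K} -> {ptws bend v iR setT -> K},
     [/\ homeo_on Yan HomR Phi0,
         (forall w, Yan w -> forall (r : R) (t : K), 0 <= t ->
            Phi0 w (cls v iR setT [:: (t, r)]) = w r * t) &
         (forall w, Yan w -> trop w = Psi (pre (Phi0 w)))].
  exists Phi; split.
  - split; first by move=> w bw; exact: (Fw_hom hv (I : setT 1) Tmul bw).
    exists (fun f => (fh f : {ptws R -> K})); split.
    + by move=> f hf; exact: (@fh_berk _ _ _ _ _ hv f hf).
    + move=> w bw; apply/funext => r; rewrite /fh Phi_cls //; last exact: v1.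
      by rewrite /vl /= mulr1 max_l // bw0.
    + move=> f hf; apply/funext => X.
      by rewrite /Phi /Fw -(hom_vl (I : setT 1) hf (rep_valid (X := X))) cls_rep.
    + exact: continuous_subspaceT.
    + apply: continuous_subspaceT; apply: into_ptws => r; exact: ev_cont.
  - move=> w bw r t t0; rewrite Phi_cls //; last exact: v1.
    by rewrite /vl /= max_l // mulr_ge0 // bw0.
  - move=> w bw; apply/funext => a.
    rewrite /Psi /pre /bend_incl Phi_cls //; last first.
      exact: (valid_mono MBT (rep_valid (X := cls v iR MB [:: (1, pi (e a))]))).
    rewrite (vlw_cls hv MBmul bw (vB1 _ _ ler01 (MBe a))).
    by rewrite /vl /= mulr1 max_l // bw0.
have w_MB : forall w, Yan w -> forall c a,
    w (pi (iP c * e a)) = v c * w (pi (e a)).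
  by move=> w [_ [_ [_ [wm [_ wc]]]]] c a; rewrite rmorphM hpik wm wc.
have Psi_in : forall f, HomB f -> exists2 w, Yan w & trop w = Psi f.
  move=> f hf.
  have := @berk_exists K R MB (fh f) MB0 MB1 MBmul (fun m _ => fh_ge0 hf m)
    (fh1 hf) (fh_mul hf) (fh_bend MB1 hf) span.
  case=> s [s0 s1 sm su sM].
  exists s; last by apply/funext => a; rewrite /trop /tropKP /= sM.
  split => //; split.
    rewrite sM //; apply/le_anti; rewrite fh_ge0 // andbT.
    have hs : forall b, b \in ([::] : seq R) -> MB b by [].
    by have := fh_bend MB1 hf MB0 hs (esym (big_nil _ _ _ _)).
  split => //; split => //; split => //.
  move=> c; rewrite sM //.
  have := fh_scal hv MB1 hf (lam := c) (c := 1) MB1.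
  by rewrite mulr1 (fh1 hf) mulr1 => ->.
have hdec : forall r, exists ca : k * A0 gens, MB r -> r = pi (iP ca.1 * e ca.2).
  move=> r; case: (pselect (MB r)) => [[c [a ->]]|nM].
    by exists (c, a).
  by exists (0, one).
pose dec := fun r => proj1_sig (cid (hdec r)).
have decP : forall r, MB r -> r = pi (iP (dec r).1 * e (dec r).2).
  by move=> r; exact: (proj2_sig (cid (hdec r))).
pose G := fun u : {ptws A0 gens -> K} =>
  @Fw K k v R iR MB (fun r => u (dec r).2 * v (dec r).1).
have G_trop : forall w, Yan w -> forall X, G (trop w) X = vl w (rep X).
  move=> w bw X; rewrite /G /Fw; apply: vl_eq_in => p hp.
  have [_ Mp] := rep_valid hp.
  by rewrite [in RHS](decP _ Mp) w_MB // mulrC.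
have part2 : homeo_on HomB Trop Psi.
  split; first by move=> f hf; have [w bw ew] := Psi_in f hf; exists w.
  exists G; split.
  - move=> u [w bw <-].
    have -> : G (trop w) = Fw w by apply/funext => X; rewrite G_trop.
    exact: (Fw_hom hv MB1 MBmul bw).
  - move=> f hf; have [w bw ew] := Psi_in f hf.
    apply/funext => X; rewrite -ew G_trop //.
    rewrite -[in RHS](cls_rep X) (hom_vl MB1 hf (rep_valid (X := X))).
    apply: vl_eq_in => p hp; have [_ Mp] := rep_valid hp.
    rewrite (decP _ Mp) w_MB //.
    have := congr1 (fun u => u (dec p.2).2) ew; rewrite /trop /tropKP /Psi /= => ->.
    rewrite rmorphM hpik.
    have := fh_scal hv MB1 hf (lam := (dec p.2).1) (c := pi (e (dec p.2).2)) (MBe _).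
    by move=> -> //; apply: MBmul.
  - move=> u [w bw <-]; apply/funext => a.
    rewrite /Psi G_trop // (vlw_cls hv MBmul bw (vB1 _ _ ler01 (MBe a))).
    by rewrite /vl /= mulr1 max_l // bw0.
  - apply: continuous_subspaceT; apply: into_ptws => a; exact: ev_cont.
  - apply: continuous_subspaceT; apply: into_ptws => X; rewrite /G /Fw /vl.
    apply: cont_mxl => p; apply: cont_mulr; apply: cont_mulr; exact: ev_cont.
split; first exact: part1.
split; first exact: part2.
split.
  split; first by move=> w bw; exists w.
  apply: continuous_subspaceT; apply: into_ptws => a; exact: ev_cont.
split.
  move=> f hf.
  have -> : pre f = Fw (fh f).
    apply/funext => X; rewrite /pre /bend_incl.
    by rewrite (hom_vl (I : setT 1) hf (valid_mono MBT (rep_valid (X := X)))).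
  exact: (Fw_hom hv MB1 MBmul (@fh_berk _ _ _ _ _ hv f hf)).
apply: continuous_subspaceT; apply: into_ptws => X; exact: ev_cont.
Qed.
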